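(* Let $T$ and $A$ be as in the context, and suppose $(ATA)^{-1}$ is Lipschitz continuous at zero. Let $\{(x_k,w_k)\}$ be an infinite sequence generated by the IPHA. Then $\{(x_k,w_k)\}$ converges linearly (to a solution of the SVI in extensive form) in the norm $\|(x,w)\|_{M_r}=\sqrt{\|x\|^2+r^{-2}\|w\|^2}$.
   Context: Multistage setting: $\Xi$ is a finite set of scenarios $\xi=(\xi_1,\dots,\xi_N)$ with probabilities $p(\xi)>0$; $n=n_1+\dots+n_N$. $\mathcal L_n$ is the space of functions $x:\Xi\to\mathbb R^n$, $x(\xi)=(x_1(\xi),\dots,x_N(\xi))$, $x_j(\xi)\in\mathbb R^{n_j}$, with inner product $\langle x,w\rangle=\sum_{\xi}p(\xi)\sum_{j}\langle x_j(\xi),w_j(\xi)\rangle$ and norm $\|\cdot\|$. $\mathcal N=\{x\in\mathcal L_n: x_j(\xi)\text{ does not depend on }\xi_j,\dots,\xi_N\}$, $\mathcal M=\mathcal N^\perp$, with orthogonal projections $P_{\mathcal N},P_{\mathcal M}$. For each $\xi$, $C(\xi)\subset\mathbb R^n$ is nonempty closed convex and $F(\cdot,\xi):\mathbb R^n\to\mathbb R^n$ is continuous monotone; $\mathcal C=\{x\in\mathcal L_n: x(\xi)\in C(\xi)\ \forall\xi\}$ and $\mathcal F(x)(\xi)=F(x(\xi),\xi)$. $r>0$ fixed. SVI in extensive form: find $x\in\mathcal N$, $w\in\mathcal M$ with $-F(x(\xi),\xi)-w(\xi)\in N_{C(\xi)}(x(\xi))$ for all $\xi$. $T:\mathcal L_n\rightrightarrows\mathcal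 L_n$ is defined by $z\in T(y)\iff P_{\mathcal N}(z)+P_{\mathcal M}(y)\in(\mathcal F+N_{\mathcal C})(P_{\mathcal N}(y)+P_{\mathcal M}(z))$, and $A(u)=P_{\mathcal N}(u)+rP_{\mathcal M}(u)$. A set-valued map $S$ with $S^{-1}=(ATA)^{-1}$ is Lipschitz continuous at zero if $S(0)=\{z^*\}$ is a singleton and there are $L,\eta>0$ with $\|z-z^*\|\le L\|v\|$ whenever $z\in S(v)$, $\|v\|\le\eta$. IPHA: choose $x_0\in\mathcal N$, $w_0\in\mathcal M$, $\bar\sigma\in(0,1)$, $\theta\in(0,1)$. At iteration $k$: choose $\sigma_k\in[0,\bar\sigma)$, find $\hat x^k,\hat w^k\in\mathcal L_n$ with $r(x_k(\xi)-\hat x^k(\xi))-w_k(\xi)\in F(\hat w^k(\xi),\xi)+N_{C(\xi)}(\hat w^k(\xi))$ for all $\xi$, $\delta^k=\hat w^k-\hat x^k$, and $\|\delta^k\|^2\le\sigma_k^2(\|a_k\|^2+\|b_k\|^2)$, where $a_k=x_k-P_{\mathcal N}(\hat x^k)+P_{\mathcal M}(\hat w^k)$, $b_k=x_k-P_{\mathcal N}(\hat w^k)+P_{\mathcal M}(\hat x^k)$. If $b_k=0$ stop; otherwise choose $\tau_k\in[1-\theta,1+\theta]$, set $\alpha_k=\langle a_k,b_k\rangle/\|a_k\|^2$, $x_{k+1}=x_k-\tau_k\alpha_k(x_k-P_{\mathcal N}(\hat x^k))$, $w_{k+1}=w_k+\tau_k\alpha_k rP_{\mathcal M}(\hat w^k)$.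 *)

(* Defs.v *)
From HB Require Import structures.
From mathcomp Require Import all_boot all_order all_algebra.
From mathcomp Require Import all_classical all_reals all_analysis.
Set Implicit Arguments. Unset Strict Implicit. Unset Printing Implicit Defensive.
Import Order.TTheory GRing.Theory Num.Theory.
Import numFieldNormedType.Exports.
Local Open Scope ring_scope.
Local Open Scope classical_set_scope.

Section Defs.
Context {R : realType}.

Definition dotv {n : nat} (u v : 'rV[R]_n) : R := \sum_(i < n) u ord0 i * v ord0 i.

Definition normal_cone {V : zmodType} (ip : V -> V -> R) (C : set V) (u : V) : set V :=
  [set v | C u /\ forall y, C y -> ip v (y - u) <= 0].

Definition is_convex {n : nat} (C : set 'rV[R]_n) : Prop :=
  forall a b t, C a -> C b -> 0 <= t -> t <= 1 -> C (t *: a + (1 - t) *: b).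

Definition monotone_map {n : nat} (G : 'rV[R]_n -> 'rV[R]_n) : Prop :=
  forall u v, 0 <= dotv (G u - G v) (u - v).

(* Scenario data: finite scenario type S with probabilities p; sc s k = xi_k
   (stage k, 0-indexed) of scenario s; coordinate i of R^n belongs to stage
   [stage i]. *)
Context {S : finType} {n N : nat} (p : S -> R) {Om : eqType}
  (sc : S -> 'I_N -> Om) (stage : 'I_n -> 'I_N).

Definition Ln := {ffun S -> 'rV[R]_n}.

Definition ipL (x y : Ln) : R := \sum_s p s * dotv (x s) (y s).
Definition normL (x : Ln) : R := Num.sqrt (ipL x x).

(* Nonanticipativity: the stage-j block x_j(xi) depends only on
   xi_1, ..., xi_{j-1} (0-indexed: on xi_k for k < j). *)
Definition Nsp : set Ln :=
  [set x : Ln | forall (s s' : S) (i : 'I_n),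
     (forall k : 'I_N, (k < stage i)%N -> sc s k = sc s' k) ->
     x s ord0 i = x s' ord0 i].

Definition Msp : set Ln := [set w : Ln | forall x, Nsp x -> ipL w x = 0].

Definition oproj (V : set Ln) (x : Ln) : Ln :=
  xget 0 [set y | V y /\ forall z, V z -> ipL (x - y) z = 0].

Definition PN := oproj Nsp.
Definition PM := oproj Msp.

Definition Ccal (C : S -> set 'rV[R]_n) : set Ln := [set x | forall s, C s (x s)].
Definition Fcal (F : S -> 'rV[R]_n -> 'rV[R]_n) (x : Ln) : Ln := [ffun s => F s (x s)].

Definition Trel F C (y z : Ln) : Prop :=
  let u := PN y + PM z in
  normal_cone ipL (Ccal C) u (PN z + PM y - Fcal F u).

Definition Aop (r : R) (u : Ln) : Ln := PN u + r *: PM u.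

Definition ATA F C r (y v : Ln) : Prop :=
  exists z, Trel F C (Aop r y) z /\ v = Aop r z.

Definition ATAinv F C r (v : Ln) : set Ln := [set y | ATA F C r y v].

Definition lipschitz_at_zero (Sm : Ln -> set Ln) : Prop :=
  exists zs : Ln, (forall z, Sm 0 z <-> z = zs) /\
  exists L eta : R, 0 < L /\ 0 < eta /\
    forall v z, Sm v z -> normL v <= eta -> normL (z - zs) <= L * normL v.

Definition normMr (r : R) (x w : Ln) : R :=
  Num.sqrt (normL x ^+ 2 + r ^-2 * normL w ^+ 2).

Definition SVI_solution F C (x w : Ln) : Prop :=
  Nsp x /\ Msp w /\
  forall s, normal_cone dotv (C s) (x s) (- F s (x s) - w s).

(* An infinite sequence generated by IPHA (never stops: b_k <> 0). *)
Definition IPHA_run F C (r sigbar theta : R) (sigma tau : nat -> R)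
  (x w xh wh : nat -> Ln) : Prop :=
  Nsp (x 0%N) /\ Msp (w 0%N) /\ 0 < sigbar < 1 /\ 0 < theta < 1 /\
  forall k : nat,
    let a := x k - PN (xh k) + PM (wh k) in
    let b := x k - PN (wh k) + PM (xh k) in
    let delta := wh k - xh k in
    let alpha := ipL a b / normL a ^+ 2 in
    (0 <= sigma k < sigbar) /\
        (forall s, normal_cone dotv (C s) (wh k s)
                     (r *: (x k s - xh k s) - w k s - F s (wh k s))) /\
        normL delta ^+ 2 <= sigma k ^+ 2 * (normL a ^+ 2 + normL b ^+ 2) /\
        b != 0 /\
        (1 - theta <= tau k <= 1 + theta) /\
        x k.+1 = x k - (tau k * alpha) *: (x k - PN (xh k)) /\
        w k.+1 = w k + (tau k * alpha * r) *: PM (wh k).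

End Defs.

(* Main.v *)
Require Import Defs.
From HB Require Import structures.
From mathcomp Require Import all_boot all_order all_algebra.
From mathcomp Require Import all_classical all_reals all_analysis.
From mathcomp Require Import ring lra.
Import Order.TTheory GRing.Theory Num.Theory.
Import numFieldNormedType.Exports.
Local Open Scope ring_scope.
Local Open Scope classical_set_scope.


Inductive wrap (P : Prop) : Prop := Wrap of P.

Ltac lineq := apply/ffunP => ?; apply/rowP => ?; rewrite !ffunE !mxE.

Section Proof1.
Variables (R : realType) (S : finType) (n N : nat) (Om : eqType)
  (p : S -> R) (sc : S -> 'I_N -> Om) (stage : 'I_n -> 'I_N).
Hypothesis p_gt0' : wrap (forall s, 0 < p s).
Lemma p_gt0 s : 0 < p s. Proof. by case: p_gt0'. Qed.

Local Notation Ln := (@Ln R S n).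
Local Notation ip := (ipL p).

Lemma dotvC (u v : 'rV[R]_n) : dotv u v = dotv v u.
Proof. by apply: eq_bigr => i _; rewrite mulrC. Qed.
Lemma dotvDl (u v w : 'rV[R]_n) : dotv (u + v) w = dotv u w + dotv v w.
Proof. rewrite /dotv -big_split; apply: eq_bigr => i _; by rewrite !mxE mulrDl. Qed.
Lemma dotvZl a (u v : 'rV[R]_n) : dotv (a *: u) v = a * dotv u v.
Proof. rewrite /dotv mulr_sumr; apply: eq_bigr => i _; rewrite !mxE; ring. Qed.
Lemma dotvNl (u v : 'rV[R]_n) : dotv (- u) v = - dotv u v.
Proof. rewrite /dotv -sumrN; apply: eq_bigr => i _; rewrite !mxE; ring. Qed.
Lemma dotv_ge0 (u : 'rV[R]_n) : 0 <= dotv u u.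
Proof. by apply: sumr_ge0 => i _; rewrite -expr2 sqr_ge0. Qed.
Lemma dotv_ge0_aux (u : 'rV[R]_n) i : 0 <= u ord0 i * u ord0 i.
Proof. by rewrite -expr2 sqr_ge0. Qed.
Lemma dotv_eq0 (u : 'rV[R]_n) : dotv u u = 0 -> u = 0.
Proof.
move=> H0; apply/rowP => i; rewrite mxE.
have := psumr_eq0P (fun i _ => dotv_ge0_aux u i) H0 (i:=i) isT.
by rewrite -expr2 => /eqP; rewrite sqrf_eq0 => /eqP.
Qed.

Lemma ipC (x y : Ln) : ip x y = ip y x.
Proof. by apply: eq_bigr => s _; rewrite dotvC. Qed.
Lemma ipDl (x y z : Ln) : ip (x + y) z = ip x z + ip y z.
Proof. rewrite /ipL -big_split; apply: eq_bigr => s _; by rewrite ffunE dotvDl mulrDr. Qed.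
Lemma ipZl a (x y : Ln) : ip (a *: x) y = a * ip x y.
Proof. rewrite /ipL mulr_sumr; apply: eq_bigr => s _; rewrite ffunE dotvZl; ring. Qed.
Lemma ipNl (x y : Ln) : ip (- x) y = - ip x y.
Proof. rewrite /ipL -sumrN; apply: eq_bigr => s _; rewrite ffunE dotvNl; ring. Qed.
Lemma ipBl (x y z : Ln) : ip (x - y) z = ip x z - ip y z.
Proof. by rewrite ipDl ipNl. Qed.
Lemma ip0l (x : Ln) : ip 0 x = 0.
Proof. by rewrite -(scale0r (0:Ln)) ipZl mul0r. Qed.
Lemma ipDr (x y z : Ln) : ip z (x + y) = ip z x + ip z y.
Proof. by rewrite ipC ipDl !(ipC z). Qed.
Lemma ipZr a (x y : Ln) : ip y (a *: x) = a * ip y x.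
Proof. by rewrite ipC ipZl !(ipC y). Qed.
Lemma ipNr (x y : Ln) : ip y (- x) = - ip y x.
Proof. by rewrite ipC ipNl !(ipC y). Qed.
Lemma ipBr (x y z : Ln) : ip z (x - y) = ip z x - ip z y.
Proof. by rewrite ipDr ipNr. Qed.
Lemma ip0r (x : Ln) : ip x 0 = 0.
Proof. by rewrite ipC ip0l. Qed.
Lemma ip_ge0 (x : Ln) : 0 <= ip x x.
Proof. by apply: sumr_ge0 => s _; exact: (mulr_ge0 (ltW (p_gt0 s)) (dotv_ge0 (x s))). Qed.
Lemma ip_eq0 (x : Ln) : ip x x = 0 -> x = 0.
Proof.
move=> H0; apply/ffunP => s; rewrite ffunE.
have := psumr_eq0P (fun s _ => mulr_ge0 (ltW (p_gt0 s)) (dotv_ge0 (x s))) H0 (i:=s) isT; move/eqP.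
by rewrite mulf_eq0 (gt_eqF (p_gt0 s)) /= => /eqP /dotv_eq0.
Qed.


Definition eqi i s t : bool := [forall k : 'I_N, (k < stage i)%N ==> (sc s k == sc t k)].

Lemma eqiP i s t : reflect (forall k : 'I_N, (k < stage i)%N -> sc s k = sc t k) (eqi i s t).
Proof.
apply: (iffP forallP) => H k; first by move=> lt; exact/eqP/(implyP (H k)).
by apply/implyP => lt; apply/eqP; exact: H.
Qed.
Lemma eqi_refl i s : eqi i s s.
Proof. by apply/eqiP. Qed.
Lemma eqi_sym i s t : eqi i s t = eqi i t s.
Proof. by apply/eqiP/eqiP => H k lt; rewrite H. Qed.
Lemma eqi_trans i s t u : eqi i s t -> eqi i t u -> eqi i s u.
Proof. by move=> /eqiP H1 /eqiP H2; apply/eqiP => k lt; rewrite H1 ?H2. Qed.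
Lemma eqi_eq i s s' : eqi i s s' -> forall t, eqi i s t = eqi i s' t.
Proof.
move=> H t; apply/idP/idP => H2; first by apply: eqi_trans H2; rewrite eqi_sym.
exact: eqi_trans H H2.
Qed.
Arguments eqi_eq {i s s'}.

Local Notation NN := (@Nsp R S n N Om sc stage).
Local Notation MM := (Msp p sc stage).

Lemma NspP (x : Ln) : NN x <-> (forall i s t, eqi i s t -> x s ord0 i = x t ord0 i).
Proof.
split=> H; first by move=> i s t /eqiP; apply: H.
by move=> s t i Hk; apply: H; apply/eqiP.
Qed.

Definition Dn i s := \sum_(t | eqi i s t) p t.
Lemma Dn_gt0 i s : 0 < Dn i s.
Proof.
rewrite /Dn (bigD1 s) ?eqi_refl //=; apply: ltr_pwDl; first exact: p_gt0.
by apply: sumr_ge0 => t _; apply: ltW; apply: p_gt0.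
Qed.

Definition cand (x : Ln) : Ln :=
  [ffun s => \row_(i < n) ((\sum_(t | eqi i s t) p t * x t ord0 i) / Dn i s)].

Lemma cand_N x : NN (cand x).
Proof.
apply/NspP => i s t H; rewrite !ffunE !mxE /Dn.
by rewrite (eq_bigl _ _ (eqi_eq H)) (eq_bigl (fun u => eqi i t u) _ (eqi_eq H)).
Qed.

Lemma ip_exch (y z : Ln) :
  ip y z = \sum_(i < n) \sum_s p s * (y s ord0 i * z s ord0 i).
Proof.
rewrite /ipL /dotv; under eq_bigr do rewrite mulr_sumr; exact: exchange_big.
Qed.

Lemma cand_orth x z : NN z -> ip (x - cand x) z = 0.
Proof.
move/NspP=> Hz; apply/eqP; rewrite ipBl subr_eq0 eq_sym; apply/eqP.
rewrite !ip_exch; apply: eq_bigr => i _.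
pose K t := p t * (x t ord0 i * z t ord0 i) / Dn i t.
transitivity (\sum_s \sum_(t | eqi i s t) p s * K t).
  apply: eq_bigr => s _; rewrite ffunE mxE mulr_suml mulr_suml mulr_sumr.
  apply: eq_bigr => t Ht; rewrite /K (Hz _ _ _ Ht).
  have -> : Dn i s = Dn i t by rewrite /Dn (eq_bigl _ _ (eqi_eq Ht)).
  have := Dn_gt0 i t; rewrite lt0r => /andP [Hd _].
  field; exact: Hd.
under eq_bigr do rewrite big_mkcond /=.
rewrite exchange_big /=; apply: eq_bigr => t _.
rewrite -big_mkcond /= -mulr_suml.
have -> : \sum_(s | eqi i s t) p s = Dn i t.
  by rewrite /Dn; apply: eq_bigl => s; rewrite eqi_sym.
have := Dn_gt0 i t; rewrite lt0r => /andP [Hd _].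
rewrite /K; field; exact: Hd.
Qed.


Definition PNl : Ln -> Ln := locked (PN p sc stage).
Definition PMl : Ln -> Ln := locked (PM p sc stage).
Lemma PNlE x : PN p sc stage x = PNl x.
Proof. by rewrite /PNl -lock. Qed.
Lemma PMlE x : PM p sc stage x = PMl x.
Proof. by rewrite /PMl -lock. Qed.
Local Notation pN := PNl.
Local Notation pM := PMl.


Lemma NN0 : NN 0.
Proof. by apply/NspP => i s t _; rewrite !ffunE !mxE. Qed.
Lemma NND x y : NN x -> NN y -> NN (x + y).
Proof. by move=> /NspP Hx /NspP Hy; apply/NspP => i s t H; rewrite !ffunE !mxE (Hx _ _ _ H) (Hy _ _ _ H). Qed.
Lemma NNZ a x : NN x -> NN (a *: x).
Proof. by move=> /NspP Hx; apply/NspP => i s t H; rewrite !ffunE !mxE (Hx _ _ _ H). Qed.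
Lemma NNN x : NN x -> NN (- x).
Proof. by move=> /NspP Hx; apply/NspP => i s t H; rewrite !ffunE !mxE (Hx _ _ _ H). Qed.
Lemma NNB x y : NN x -> NN y -> NN (x - y).
Proof. by move=> Hx Hy; apply: NND => //; apply: NNN. Qed.

Lemma MM0 : MM 0.
Proof. by move=> z _; rewrite ip0l. Qed.
Lemma MMD x y : MM x -> MM y -> MM (x + y).
Proof. by move=> Hx Hy z Hz; rewrite ipDl Hx // Hy // addr0. Qed.
Lemma MMZ a x : MM x -> MM (a *: x).
Proof. by move=> Hx z Hz; rewrite ipZl Hx // mulr0. Qed.
Lemma MMN x : MM x -> MM (- x).
Proof. by move=> Hx z Hz; rewrite ipNl Hx // oppr0. Qed.
Lemma MMB x y : MM x -> MM y -> MM (x - y).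
Proof. by move=> Hx Hy; apply: MMD => //; apply: MMN. Qed.

Lemma ip_NM a b : NN a -> MM b -> ip a b = 0.
Proof. by move=> Ha Hb; rewrite ipC Hb. Qed.
Arguments ip_NM {a b}.

Lemma PN_spec x : NN (pN x) /\ forall z, NN z -> ip (x - pN x) z = 0.
Proof.
have H : exists y, [set y : Ln | NN y /\ forall z, NN z -> ip (x - y) z = 0] y.
  by exists (cand x); split; [exact: cand_N | exact: cand_orth].
rewrite -PNlE /PN /oproj.
exact: (xgetPex 0 H).
Qed.

Lemma PN_uniq x y : NN y -> (forall z, NN z -> ip (x - y) z = 0) -> pN x = y.
Proof.
move=> Hy Hyo; have [H1 H2] := PN_spec x.
have Hd : NN (pN x - y) by apply: NNB.
apply/eqP; rewrite -subr_eq0; apply/eqP; apply: ip_eq0.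
have E : pN x - y = (x - y) - (x - pN x) by move: (pN x) => X; lineq; ring.
by rewrite {1}E ipBl Hyo // H2 // subrr.
Qed.

Lemma PN_N x : NN x -> pN x = x.
Proof. by move=> Hx; apply: PN_uniq => // z _; rewrite subrr ip0l. Qed.
Lemma PN_in x : NN (pN x).
Proof. by case: (PN_spec x). Qed.
Lemma PN_idem x : pN (pN x) = pN x.
Proof. exact/PN_N/PN_in. Qed.
Lemma PN_M x : MM x -> pN x = 0.
Proof. by move=> Hx; apply: PN_uniq; [exact: NN0 | move=> z Hz; rewrite subr0 Hx]. Qed.
Lemma PM_in' x : MM (x - pN x).
Proof. by move=> z Hz; case: (PN_spec x) => _ ->. Qed.
Lemma PM_eq x : pM x = x - pN x.
Proof.
rewrite -PMlE /PM /oproj; apply: xget_unique.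
  split; first exact: PM_in'.
  move=> z Hz; have -> : x - (x - pN x) = pN x by move: (pN x) => X; lineq; ring.
  exact: ip_NM (PN_in _) Hz.
move=> y [Hy Hyo]; have Hd : MM (y - (x - pN x)) by apply: MMB => //; apply: PM_in'.
apply/eqP; rewrite -subr_eq0; apply/eqP; apply: ip_eq0.
have E : y - (x - pN x) = (x - (x - pN x)) - (x - y) by move: (pN x) => X; lineq; ring.
rewrite {1}E ipBl Hyo //.
have -> : x - (x - pN x) = pN x by move: (pN x) => X; lineq; ring.
by rewrite (ip_NM (PN_in _) Hd) subrr.
Qed.
Lemma PM_in x : MM (pM x).
Proof. rewrite PM_eq; exact: PM_in'. Qed.

Lemma PND x y : pN (x + y) = pN x + pN y.
Proof.
apply: PN_uniq; first by apply: NND; apply: PN_in.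
move=> z Hz; have -> : x + y - (pN x + pN y) = (x - pN x) + (y - pN y) by move: (pN x) (pN y) => X Y; lineq; ring.
by rewrite ipDl !(proj2 (PN_spec _) z Hz) addr0.
Qed.
Lemma PNZ a x : pN (a *: x) = a *: pN x.
Proof.
apply: PN_uniq; first by apply: NNZ; apply: PN_in.
move=> z Hz; have -> : a *: x - a *: pN x = a *: (x - pN x) by move: (pN x) => X; lineq; ring.
by rewrite ipZl !(proj2 (PN_spec _) z Hz) mulr0.
Qed.
Lemma PNN x : pN (- x) = - pN x.
Proof. by rewrite -scaleN1r PNZ scaleN1r. Qed.
Lemma PNB x y : pN (x - y) = pN x - pN y.
Proof. by rewrite PND PNN. Qed.
Lemma PN0 : pN 0 = 0.
Proof. by have := PNZ 0 0; rewrite !scale0r. Qed.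

Lemma ip_split x y : ip x y = ip (pN x) (pN y) + ip (pM x) (pM y).
Proof.
have Ex : x = pN x + pM x by rewrite PM_eq; move: (pN x) => X; lineq; ring.
have Ey : y = pN y + pM y by rewrite PM_eq; move: (pN y) => Y; lineq; ring.
rewrite {1}Ex {1}Ey ipDl !ipDr (ip_NM (PN_in _) (PM_in _)).
by rewrite (ipC (pM x)) (ip_NM (PN_in _) (PM_in _)) addr0 add0r.
Qed.


Lemma PN_PM x : pN (pM x) = 0.
Proof. exact/PN_M/PM_in. Qed.
Lemma PM_PN x : pM (pN x) = 0.
Proof. by rewrite PM_eq PN_idem subrr. Qed.
Lemma PM_PM x : pM (pM x) = pM x.
Proof. by rewrite {1}PM_eq PN_PM subr0. Qed.
Lemma PMD x y : pM (x + y) = pM x + pM y.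
Proof. by rewrite !PM_eq PND; move: (pN x) (pN y) => X Y; lineq; ring. Qed.
Lemma PMZ a x : pM (a *: x) = a *: pM x.
Proof. by rewrite !PM_eq PNZ; move: (pN x) => X; lineq; ring. Qed.
Lemma PMB x y : pM (x - y) = pM x - pM y.
Proof. by rewrite !PM_eq PNB; move: (pN x) (pN y) => X Y; lineq; ring. Qed.
Lemma PMN x : pM (- x) = - pM x.
Proof. by rewrite -scaleN1r PMZ scaleN1r. Qed.
Lemma PM0 : pM 0 = 0.
Proof. by rewrite PM_eq PN0 subr0. Qed.
Lemma PM_M x : MM x -> pM x = x.
Proof. by move=> Hx; rewrite PM_eq PN_M // subr0. Qed.
Lemma PM_N x : NN x -> pM x = 0.
Proof. by move=> Hx; rewrite PM_eq PN_N // subrr. Qed.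
Lemma PNPM x : pN x + pM x = x.
Proof. by rewrite PM_eq; move: (pN x) => X; lineq; ring. Qed.

Lemma dotv0r (u : 'rV[R]_n) : dotv u 0 = 0.
Proof. by rewrite /dotv big1 // => i _; rewrite mxE mulr0. Qed.

Variables (F : S -> 'rV[R]_n -> 'rV[R]_n) (C : S -> set 'rV[R]_n) (r : R).
Hypothesis Fmono' : wrap (forall s, monotone_map (F s)).
Lemma Fmono s : monotone_map (F s). Proof. by case: Fmono'. Qed.
Hypothesis r_gt0' : wrap (0 < r).
Lemma r_gt0 : 0 < r. Proof. by case: r_gt0'. Qed.

Local Notation Cc := (@Ccal R S n C).
Local Notation Fc := (@Fcal R S n F).
Local Notation A := (Aop p sc stage r).
Local Notation TT := (Trel p sc stage F C).
Local Notation AT := (ATA p sc stage F C r).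

Lemma Fcal_mono (u u' : Ln) : 0 <= ip (Fc u - Fc u') (u - u').
Proof.
apply: sumr_ge0 => s _; apply: mulr_ge0; first exact/ltW/p_gt0.
rewrite !ffunE; exact: Fmono.
Qed.

Lemma cone_mono (u u' g g' : Ln) : normal_cone ip Cc u g -> normal_cone ip Cc u' g' ->
  0 <= ip (g - g') (u - u').
Proof.
move=> [Cu Hu] [Cu' Hu']; have := Hu u' Cu'; have := Hu' u Cu.
have E : u' - u = - (u - u') by lineq; ring.
rewrite E ipNr ipBl; lra.
Qed.
Arguments cone_mono {u u' g g'}.

Lemma cone_of_pointwise (u g : Ln) : (forall s, normal_cone dotv (C s) (u s) (g s)) ->
  normal_cone ip Cc u g.
Proof.
move=> H; split; first by move=> s; case: (H s).
move=> y Cy; apply: sumr_le0 => s _; apply: mulr_ge0_le0; first exact/ltW/p_gt0.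
rewrite !ffunE; case: (H s) => _ Hs; apply: Hs; apply: Cy.
Qed.

Lemma pointwise_of_cone (u g : Ln) : normal_cone ip Cc u g ->
  forall s, normal_cone dotv (C s) (u s) (g s).
Proof.
move=> [Cu H] s; split; first exact: Cu.
move=> c Cc'; pose y : Ln := [ffun t => if t == s then c else u t].
have Cy : Cc y by move=> t; rewrite ffunE; case: eqP => [->|] //; exact: Cu.
have := H y Cy; rewrite /ipL (bigD1 s) //= big1 ?addr0.
  by rewrite !ffunE eqxx (pmulr_rle0 _ (p_gt0 s)).
by move=> t /negbTE Hts; rewrite !ffunE Hts subrr dotv0r mulr0.
Qed.

Lemma ip_cross (a b c d : Ln) :
  ip (pN a + pM b) (pN c + pM d) = ip (pN a) (pN c) + ip (pM b) (pM d).
Proof.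
rewrite ipDl !ipDr (ip_NM (PN_in _) (PM_in _)) (ipC (pM b) (pN c)).
by rewrite (ip_NM (PN_in _) (PM_in _)) addr0 add0r.
Qed.

Lemma Trel_mono (y z y' z' : Ln) : TT y z -> TT y' z' -> 0 <= ip (z - z') (y - y').
Proof.
rewrite /Trel /= !PNlE !PMlE => H1 H2; have := cone_mono H1 H2.
have := Fcal_mono (pN y + pM z) (pN y' + pM z').
set u := pN y + pM z; set u' := pN y' + pM z'.
set G := pN z + pM y; set G' := pN z' + pM y'.
move=> Hf Hc.
have E : G - G' = (G - Fc u - (G' - Fc u')) + (Fc u - Fc u') by move: (G) (G') (Fc u) (Fc u') => a b c d; lineq; ring.
have HG : 0 <= ip (G - G') (u - u') by rewrite E ipDl; lra.
suff -> : ip (z - z') (y - y') = ip (G - G') (u - u') by [].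
have EG : G - G' = pN (z - z') + pM (y - y') by rewrite /G /G' PNB PMB; move: (pN z) (pN z') (pM y) (pM y') => a b c d; lineq; ring.
have Eu : u - u' = pN (y - y') + pM (z - z') by rewrite /u /u' PNB PMB; move: (pN y) (pN y') (pM z) (pM z') => a b c d; lineq; ring.
by rewrite EG Eu ip_cross (ip_split (z - z')) (ipC (pM (z - z'))).
Qed.

Lemma AopE (u : Ln) : A u = pN u + r *: pM u.
Proof. by rewrite /Aop PNlE PMlE. Qed.

Lemma PN_A (u : Ln) : pN (A u) = pN u.
Proof. by rewrite !AopE PND PNZ PN_PM scaler0 addr0 PN_idem. Qed.
Lemma PM_A (u : Ln) : pM (A u) = r *: pM u.
Proof. by rewrite !AopE PMD PMZ PM_PN PM_PM add0r. Qed.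
Lemma AB (u v : Ln) : A (u - v) = A u - A v.
Proof. by rewrite !AopE PNB PMB; move: (pN u) (pN v) (pM u) (pM v) => a b c d; lineq; ring. Qed.
Lemma ip_A (u v : Ln) : ip (A u) v = ip u (A v).
Proof. by rewrite ip_split (ip_split u) PN_A PM_A PN_A PM_A ipZl ipZr. Qed.

Lemma ATA_mono (y v y' v' : Ln) : AT y v -> AT y' v' -> 0 <= ip (v - v') (y - y').
Proof.
move=> [z [Hz ->]] [z' [Hz' ->]].
by rewrite -AB ip_A AB; apply: Trel_mono.
Qed.

Lemma cone_congr (U U' G G' : Ln) : U = U' -> G = G' ->
  normal_cone ip Cc U' G' -> normal_cone ip Cc U G.
Proof. by move=> -> ->. Qed.
Arguments cone_congr {U U' G G'}.

Lemma ATA_intro (y v : Ln) :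
  normal_cone ip Cc (pN y + r^-1 *: pM v) (pN v + r *: pM y - Fc (pN y + r^-1 *: pM v)) ->
  AT y v.
Proof.
move=> H; exists (pN v + r^-1 *: pM v); split.
  rewrite /Trel /= !PNlE !PMlE.
  have E1 : pN (A y) + pM (pN v + r^-1 *: pM v) = pN y + r^-1 *: pM v.
    by rewrite PN_A PMD PM_PN PMZ PM_PM add0r.
  have E2 : pN (pN v + r^-1 *: pM v) + pM (A y) = pN v + r *: pM y.
    by rewrite PM_A PND PN_idem PNZ PN_PM scaler0 addr0.
  apply: (cone_congr E1 _ H).
  by congr (_ - Fc _); [exact: E2 | exact: E1].
Time rewrite !AopE PND PN_idem PNZ PN_PM scaler0 addr0 PMD PM_PN PMZ PM_PM add0r.
Time rewrite scalerA mulfV ?(gt_eqF r_gt0) // scale1r.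
exact/esym/PNPM.
Qed.


Arguments PN_N {x}. Arguments PN_M {x}. Arguments PM_N {x}. Arguments PM_M {x}.

Lemma step_ATA (xk wk xhk whk : Ln) : NN xk -> MM wk ->
  (forall s, normal_cone dotv (C s) (whk s) (r *: (xk s - xhk s) - wk s - F s (whk s))) ->
  AT (xk - r^-1 *: wk - (xk - pN whk + pM xhk)) (r *: (xk - pN xhk + pM whk)).
Proof.
move=> Hx Hw H; apply: ATA_intro.
have rN : r != 0 by rewrite gt_eqF // r_gt0.
set y := xk - r^-1 *: wk - (xk - pN whk + pM xhk).
set v := r *: (xk - pN xhk + pM whk).
have Eu : pN y + r^-1 *: pM v = whk.
  rewrite /y /v !(PNB, PND, PNZ, PNN) (PN_N Hx) (PN_M Hw) PN_idem PN_PM.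
  rewrite !(PMB, PMD, PMZ, PMN) (PM_N Hx) PM_PN PM_PM (PM_eq whk).
  by move: (pN whk) => c; lineq; field.
pose g : Ln := [ffun s => r *: (xk s - xhk s) - wk s - F s (whk s)].
have Eg : pN v + r *: pM y - Fc whk = g.
  rewrite /y /v !(PNB, PND, PNZ, PNN) (PN_N Hx) PN_idem PN_PM.
  rewrite !(PMB, PMD, PMZ, PMN) (PM_N Hx) (PM_M Hw) PM_PN PM_PM (PM_eq xhk).
  by rewrite /Fcal /g; move: (pN xhk) => c; lineq; field.
apply: (cone_congr Eu _ (cone_of_pointwise whk g _)).
  by rewrite -Eg; congr (_ - Fc _).
by move=> s; rewrite /g ffunE; exact: H.
Qed.

Lemma sol_of_ATA zs : AT zs 0 ->
  SVI_solution p sc stage F C (pN zs) (- (r *: pM zs)).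
Proof.
move=> [z [Hz H0]].
have Hz1 : pN z = 0 by have := congr1 pN H0; rewrite PN_A PN0.
have Hz2 : pM z = 0.
  have := congr1 pM H0; rewrite PM_A PM0 => /esym /eqP.
  by rewrite scaler_eq0 (gt_eqF r_gt0) /= => /eqP.
split; first exact: PN_in.
split; first by apply: MMN; apply: MMZ; exact: PM_in.
move: Hz; rewrite /Trel /= !PNlE !PMlE Hz1 Hz2 PN_A PM_A addr0 add0r => Hc s.
have := pointwise_of_cone _ _ Hc s.
suff -> : - F s (pN zs s) - (- (r *: pM zs)) s = (r *: pM zs - Fc (pN zs)) s by [].
rewrite /Fcal !ffunE; move: (F s _) (pM zs s) => a b; apply/rowP => j; rewrite !mxE; ring.
Qed.

Lemma normMr_eq (X W zs : Ln) : NN X -> MM W ->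
  normMr p r (X - pN zs) (W - (- (r *: pM zs))) =
  Num.sqrt (ip (X - r^-1 *: W - zs) (X - r^-1 *: W - zs)).
Proof.
move=> HX HW; rewrite /normMr /normL !sqr_sqrtr ?ip_ge0 //; congr (Num.sqrt _).
have rN : r != 0 by rewrite gt_eqF // r_gt0.
have Ha : NN (X - pN zs) by apply: NNB => //; exact: PN_in.
have Hb : MM (W - - (r *: pM zs)) by apply: MMB => //; apply: MMN; apply: MMZ; exact: PM_in.
have E : X - r^-1 *: W - zs = (X - pN zs) - r^-1 *: (W - - (r *: pM zs)).
  by rewrite -[in LHS](PNPM zs); move: (pN zs) (pM zs) => c d; lineq; field.
rewrite E; move: Ha Hb; move: (X - pN zs) (W - - (r *: pM zs)) => a b Ha Hb.
rewrite ipBl !ipBr !ipZl !ipZr (ip_NM Ha Hb) (ipC b a) (ip_NM Ha Hb).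
by field.
Qed.

Lemma hpe_real (Qe Qa Qb be ab Qab sig sb th tau : R) :
  0 < Qa -> 0 < Qb -> ab <= be -> Qab = Qa + Qb - 2 * ab ->
  Qab <= sig ^+ 2 * (Qa + Qb) -> 0 <= sig -> sig < sb -> sb < 1 ->
  0 < th -> th < 1 -> 1 - th <= tau -> tau <= 1 + th ->
  Qe - 2 * (tau * (ab / Qa)) * be + (tau * (ab / Qa)) ^+ 2 * Qa <=
  Qe - ((1 - th ^+ 2) * (1 - sb ^+ 2) ^+ 2 / 4) * (Qa + Qb).
Proof.
move=> Qa0 Qb0 Hbe EQ Hs sig0 sigsb sb1 th0 th1 tau1 tau2.
have hm : 0 < 1 - sb ^+ 2 by nra.
have hs2 : 0 <= sb ^+ 2 - sig ^+ 2 by nra.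
have hq : 0 <= Qa + Qb by lra.
have hp := mulr_ge0 hs2 hq.
have h1 : (1 - sb ^+ 2) * (Qa + Qb) <= 2 * ab.
  rewrite EQ in Hs; move: Hs hp; set P := sig ^+ 2; set T := sb ^+ 2; nra.
have hab : 0 < ab by nra.
have h2 : 1 - th ^+ 2 <= tau * (2 - tau) by nra.
have ht : 0 < 1 - th ^+ 2 by nra.
have h3 : (1 - sb ^+ 2) ^+ 2 * (Qa + Qb) * Qa <= 4 * ab ^+ 2.
  have : ((1 - sb ^+ 2) * (Qa + Qb)) ^+ 2 <= (2 * ab) ^+ 2.
    by rewrite ler_sqr ?nnegrE; [exact: h1 | nra | nra].
  nra.
set t := tau * (ab / Qa).
have tQa : t * Qa = tau * ab by rewrite /t; field; rewrite gt_eqF.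
have t0 : 0 <= t by rewrite /t; apply: mulr_ge0; [nra | apply: divr_ge0; nra].
have step1 : Qe - 2 * t * be + t ^+ 2 * Qa <= Qe - t * ab * (2 - tau).
  have -> : t ^+ 2 * Qa = t * (tau * ab) by rewrite -tQa; ring.
  nra.
apply: (le_trans step1).
have E2 : t * ab * (2 - tau) = tau * (2 - tau) * ab ^+ 2 / Qa by rewrite /t; field; rewrite gt_eqF.
rewrite E2 lerD2l lerN2 ler_pdivlMr //.
have : (1 - th ^+ 2) * ((1 - sb ^+ 2) ^+ 2 * (Qa + Qb) * Qa) <= tau * (2 - tau) * (4 * ab ^+ 2).
  apply: ler_pM; [exact: ltW ht | | exact: h2 | exact: h3].
  by apply: mulr_ge0; [apply: mulr_ge0; [exact: sqr_ge0 | lra] | lra].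
nra.
Qed.


Arguments step_ATA {xk wk xhk whk}.
Arguments ATA_mono {y v y' v'}.
Lemma normL_sq (u : Ln) : normL p u ^+ 2 = ip u u.
Proof. exact: sqr_sqrtr (ip_ge0 u). Qed.

Lemma ip_par (a b : Ln) : ip (a + b) (a + b) <= 2 * ip a a + 2 * ip b b.
Proof.
have := ip_ge0 (a - b); rewrite !ipDl !ipDr !ipNl !ipNr (ipC b a); lra.
Qed.

Lemma K_real (Qe Qe0 Qa Qb L eta : R) : 0 <= Qe -> Qe <= Qe0 -> 0 <= Qa -> 0 <= Qb ->
  0 < eta ->
  (Qe <= 2 * L ^+ 2 * r ^+ 2 * Qa + 2 * Qb \/ eta ^+ 2 < r ^+ 2 * Qa) ->
  Qe <= (2 * L ^+ 2 * r ^+ 2 + 2 + r ^+ 2 * Qe0 / eta ^+ 2) * (Qa + Qb).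
Proof.
move=> Qe0' QeQ Qa0 Qb0 eta0 H.
have hL : 0 <= 2 * L ^+ 2 * r ^+ 2 by apply: mulr_ge0; [apply: mulr_ge0 => //; exact: sqr_ge0 | exact: sqr_ge0].
have hD : 0 <= r ^+ 2 * Qe0 / eta ^+ 2.
  by apply: divr_ge0; [apply: mulr_ge0; [exact: sqr_ge0 | lra] | exact: sqr_ge0].
have p1 := mulr_ge0 hL Qb0.
have p2 := mulr_ge0 hD Qa0.
have p3 := mulr_ge0 hD Qb0.
case: H => H.
  rewrite !mulrDl !mulrDr; lra.
have e2 : 0 < eta ^+ 2 by apply: exprn_gt0.
have : Qe0 <= r ^+ 2 * Qe0 / eta ^+ 2 * Qa.
  rewrite mulrAC ler_pdivlMr //; have := ler_wpM2l (le_trans Qe0' QeQ) (ltW H); nra.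
rewrite !mulrDl !mulrDr; have p4 := mulr_ge0 hL Qa0; lra.
Qed.

Lemma contr_real (Qe Qe' Sa rho K : R) : 0 <= rho -> 0 < K -> Qe' <= Qe - rho * Sa ->
  Qe <= K * Sa -> Qe' <= (1 - rho / K) * Qe.
Proof.
move=> rho0 K0 H1 H2.
have : Qe / K <= Sa by rewrite ler_pdivrMr // mulrC.
move=> H3; have := ler_wpM2l rho0 H3.
have -> : rho * (Qe / K) = rho / K * Qe by rewrite mulrA mulrAC.
lra.
Qed.

Lemma qa_contra (Qb s sb : R) : 0 < Qb -> 0 <= s -> s < sb -> sb < 1 ->
  0 + Qb - 2 * 0 <= s ^+ 2 * (0 + Qb) -> False.
Proof.
move=> h0 h1 h2 h3 h4.
have hs : s ^+ 2 < 1 by nra.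
have hs' : 0 < 1 - s ^+ 2 by rewrite subr_gt0.
have := mulr_gt0 h0 hs'.
rewrite mulr0 add0r subr0 in h4; nra.
Qed.

Lemma lin1 (Qe Qd Qa Qb L : R) : Qe <= 2 * Qd + 2 * Qb -> Qd <= L ^+ 2 * (r ^+ 2 * Qa) ->
  Qe <= 2 * L ^+ 2 * r ^+ 2 * Qa + 2 * Qb.
Proof. move=> *; lra. Qed.

Lemma rho_pos (th sb : R) : 0 < th -> th < 1 -> 0 < sb -> sb < 1 ->
  0 < (1 - th ^+ 2) * (1 - sb ^+ 2) ^+ 2 / 4.
Proof.
move=> *; apply: divr_gt0 => //; apply: mulr_gt0; first nra.
by apply: exprn_gt0; nra.
Qed.
Lemma desc_real (a b c d rho : R) : 0 <= rho -> 0 <= c -> 0 <= d ->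
  a <= b - rho * (c + d) -> a <= b.
Proof. move=> h0 h1 h2 h3; have := mulr_ge0 h0 (addr_ge0 h1 h2); lra. Qed.
Lemma two_le (a b : R) : 0 <= a -> 0 <= b -> 2 <= a + 2 + b.
Proof. move=> *; lra. Qed.
Lemma sub_lt1 (x : R) : 0 < x -> 1 - x < 1.
Proof. move=> *; lra. Qed.
Lemma rho_small (th sb K : R) : 0 < th -> th < 1 -> 0 < sb -> sb < 1 -> 2 <= K ->
  (1 - th ^+ 2) * (1 - sb ^+ 2) ^+ 2 / 4 / K < 1.
Proof.
move=> th0 th1 sb0 sb1 K2.
rewrite ltr_pdivrMr; last lra.
rewrite mul1r.
have : (1 - th ^+ 2) * (1 - sb ^+ 2) ^+ 2 <= 1.
  have h1 : 0 <= 1 - th ^+ 2 <= 1 by apply/andP; split; nra.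
  have h2 : 0 <= (1 - sb ^+ 2) ^+ 2 <= 1.
    by apply/andP; split; [exact: sqr_ge0 | rewrite expr_le1 //; nra].
  case/andP: h1 => h1 h1'; case/andP: h2 => h2 h2'.
  by have := ler_pM h1 h2 h1' h2'; rewrite mulr1.
lra.
Qed.
Arguments desc_real {a b c d rho}.
Arguments qa_contra {Qb s sb}.
Arguments lin1 {Qe Qd Qa Qb L}.
Arguments contr_real {Qe Qe' Sa rho K}.
Arguments hpe_real {Qe Qa Qb be ab Qab sig sb th tau}.

Lemma main_conv sigbar theta sigma tau (x w xh wh : nat -> Ln) :
  lipschitz_at_zero p (ATAinv p sc stage F C r) ->
  IPHA_run p sc stage F C r sigbar theta sigma tau x w xh wh ->
  exists xs ws : Ln, SVI_solution p sc stage F C xs ws /\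
    (fun k => normMr p r (x k - xs) (w k - ws)) @ \oo --> 0 /\
    exists (c : R) (k0 : nat), 0 < c < 1 /\
      forall k, (k0 <= k)%N ->
        normMr p r (x k.+1 - xs) (w k.+1 - ws) <= c * normMr p r (x k - xs) (w k - ws).
Proof.
move=> [zs [Hzs [L [eta [L0 [eta0 Hlip]]]]]] [Hx0 [Hw0 [/andP [sb0 sb1] [/andP [th0 th1] Hk]]]].
have AT0 : AT zs 0 by have := proj2 (Hzs zs) erefl.
exists (pN zs), (- (r *: pM zs)).
split; first exact: sol_of_ATA.
have rN : r != 0 by rewrite gt_eqF // r_gt0.
have HNM : forall k, NN (x k) /\ MM (w k).
  elim=> [|k [IHx IHw]]; first by split.
  case: (Hk k) => _ [_ [_ [_ [_ [Ex Ew]]]]]; rewrite !PNlE !PMlE in Ex Ew; split.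
    by rewrite Ex; apply: NNB => //; apply: NNZ; apply: NNB => //; exact: PN_in.
  by rewrite Ew; apply: MMD => //; apply: MMZ; exact: PM_in.
pose e k := x k - r^-1 *: w k - zs.
have Hnorm : forall k, normMr p r (x k - pN zs) (w k - - (r *: pM zs)) = Num.sqrt (ip (e k) (e k)).
  by move=> k; case: (HNM k) => Hx Hw; rewrite normMr_eq.
pose ak k := x k - pN (xh k) + pM (wh k).
pose bk k := x k - pN (wh k) + pM (xh k).
pose rho := (1 - theta ^+ 2) * (1 - sigbar ^+ 2) ^+ 2 / 4.
have Hstep : forall k, ip (e k.+1) (e k.+1) <=
    ip (e k) (e k) - rho * (ip (ak k) (ak k) + ip (bk k) (bk k)).
  move=> k; case: (HNM k) => Hx Hw.
  case: (Hk k) => /andP [sg0 sg1] [Hcone [Herr [Hb [/andP [tau1 tau2] [Ex Ew]]]]].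
  rewrite !PNlE !PMlE in Herr Hb Ex Ew.
  have Hd : ak k - bk k = wh k - xh k.
    by rewrite /ak /bk !PM_eq; move: (pN (xh k)) (pN (wh k)) => c1 c2; lineq; ring.
  have Herr' : ip (ak k - bk k) (ak k - bk k) <=
      sigma k ^+ 2 * (ip (ak k) (ak k) + ip (bk k) (bk k)).
    by rewrite Hd -!normL_sq; exact: Herr.
  have Hmono : 0 <= ip (r *: ak k - 0) ((x k - r^-1 *: w k - bk k) - zs) :=
    ATA_mono (step_ATA Hx Hw Hcone) AT0.
  have Hab : ip (ak k) (bk k) <= ip (ak k) (e k).
    have E : x k - r^-1 *: w k - bk k - zs = e k - bk k by rewrite /e addrAC.
    by move: Hmono; rewrite E subr0 ipZl (pmulr_rge0 _ r_gt0) ipBr subr_ge0.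
  have Qb0 : 0 < ip (bk k) (bk k).
    rewrite lt0r ip_ge0 andbT; apply/eqP => /ip_eq0 H0; move: Hb; rewrite /bk in H0.
    by rewrite H0 eqxx.
  have EQ : ip (ak k - bk k) (ak k - bk k) =
      ip (ak k) (ak k) + ip (bk k) (bk k) - 2 * ip (ak k) (bk k).
    rewrite ipBl !ipBr (ipC (bk k) (ak k)); ring.
  have Qa0 : 0 < ip (ak k) (ak k).
    rewrite lt0r ip_ge0 andbT; apply/eqP => Ha0.
    have a0 := ip_eq0 _ Ha0.
    have ab0 : ip (ak k) (bk k) = 0 by rewrite a0 ip0l.
    by move: Herr'; rewrite EQ Ha0 ab0 => H; exact: (qa_contra Qb0 sg0 sg1 sb1 H).
  have Ee : e k.+1 = e k - (tau k * (ip (ak k) (bk k) / normL p (ak k) ^+ 2)) *: ak k.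
    rewrite /e Ex Ew; move: (tau k * _) => t.
    by rewrite /ak; move: (pN (xh k)) (pM (wh k)) => c1 c2; lineq; field.
  have EQe : forall t, ip (e k - t *: ak k) (e k - t *: ak k) =
      ip (e k) (e k) - 2 * t * ip (ak k) (e k) + t ^+ 2 * ip (ak k) (ak k).
    by move=> t; move: (e k) (ak k) => E0 A0; rewrite ipBl !ipBr !ipZl !ipZr (ipC E0 A0); ring.
  rewrite Ee normL_sq EQe /rho.
  apply: (hpe_real Qa0 Qb0 Hab EQ Herr' sg0 sg1 sb1 th0 th1 tau1 tau2).
have rho0 : 0 < rho by exact: (rho_pos _ _ th0 th1 sb0 sb1).
have Hdesc : forall k, ip (e k.+1) (e k.+1) <= ip (e k) (e k).
  by move=> k; exact: (desc_real (ltW rho0) (ip_ge0 _) (ip_ge0 _) (Hstep k)).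
have Hbnd : forall k, ip (e k) (e k) <= ip (e 0%N) (e 0%N).
  elim=> [|k IH]; first exact: lexx.
  exact: le_trans (Hdesc k) IH.
pose K := 2 * L ^+ 2 * r ^+ 2 + 2 + r ^+ 2 * ip (e 0%N) (e 0%N) / eta ^+ 2.
have K2 : 2 <= K.
  have hL : 0 <= 2 * L ^+ 2 * r ^+ 2.
    by apply: mulr_ge0; [apply: mulr_ge0 => //; exact: sqr_ge0 | exact: sqr_ge0].
  have hD : 0 <= r ^+ 2 * ip (e 0%N) (e 0%N) / eta ^+ 2.
    by apply: divr_ge0; [apply: mulr_ge0; [exact: sqr_ge0 | exact: ip_ge0] | exact: sqr_ge0].
  exact: (two_le _ _ hL hD).
have K0 : 0 < K by apply: lt_le_trans K2.
have HK : forall k, ip (e k) (e k) <= K * (ip (ak k) (ak k) + ip (bk k) (bk k)).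
  move=> k; case: (HNM k) => Hx Hw.
  case: (Hk k) => _ [Hcone _].
  have HA := step_ATA Hx Hw Hcone.
  apply: K_real; [exact: ip_ge0 | exact: Hbnd | exact: ip_ge0 | exact: ip_ge0 | exact: eta0 |].
  have QrA : ip (r *: ak k) (r *: ak k) = r ^+ 2 * ip (ak k) (ak k).
    by move: (ak k) => A0; rewrite ipZl ipZr mulrA expr2.
  case: (lerP (normL p (r *: ak k)) eta) => Hv.
    left; have := Hlip _ _ HA Hv; rewrite addrAC => Hl.
    have Hl2 : ip (e k - bk k) (e k - bk k) <= L ^+ 2 * (r ^+ 2 * ip (ak k) (ak k)).
      rewrite -QrA; move: Hl; rewrite /normL.
      have s0 := sqrtr_ge0 (ip (e k - bk k) (e k - bk k)).
      have s1 := sqrtr_ge0 (ip (r *: ak k) (r *: ak k)).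
      rewrite -(ler_sqr (x := Num.sqrt _)) ?nnegrE //; last exact: mulr_ge0 (ltW L0) s1.
      by rewrite exprMn !sqr_sqrtr ?ip_ge0.
    by have := ip_par (e k - bk k) (bk k); rewrite subrK => H1; apply: (lin1 H1 Hl2).
  right; move: Hv; rewrite /normL -(ltr_sqr (x := eta)) ?nnegrE ?sqrtr_ge0 ?(ltW eta0) //.
  by rewrite sqr_sqrtr ?ip_ge0 // QrA.
have Hcontr : forall k, ip (e k.+1) (e k.+1) <= (1 - rho / K) * ip (e k) (e k).
  by move=> k; apply: (contr_real (ltW rho0) K0 (Hstep k) (HK k)).
have rK0 : 0 < rho / K by apply: divr_gt0.
have rK1 : rho / K < 1 by exact: (rho_small _ _ _ th0 th1 sb0 sb1 K2).
pose c := Num.sqrt (1 - rho / K).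
have c0 : 0 < c by rewrite sqrtr_gt0 subr_gt0.
have c1 : c < 1 by have := sub_lt1 _ rK0; rewrite -(ltr_sqrt _ ltr01) sqrtr1.
have Hrate : forall k, Num.sqrt (ip (e k.+1) (e k.+1)) <= c * Num.sqrt (ip (e k) (e k)).
  move=> k; rewrite /c -sqrtrM; last by rewrite subr_ge0 ltW.
  exact: ler_wsqrtr (Hcontr k).
split.
  have Hgeo : forall k, Num.sqrt (ip (e k) (e k)) <= c ^+ k * Num.sqrt (ip (e 0%N) (e 0%N)).
    elim=> [|k IH]; first by rewrite expr0 mul1r.
    apply: (le_trans (Hrate k)); rewrite exprS -mulrA; apply: ler_wpM2l => //; exact: ltW.
  have Hc : `|c| < 1 by rewrite ger0_norm // ltW.
  have Hg : (fun k => c ^+ k * Num.sqrt (ip (e 0%N) (e 0%N))) @ \oo --> 0.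
    have := cvgMl (cvg_expr Hc) (b := Num.sqrt (ip (e 0%N) (e 0%N))); rewrite mul0r; exact.
  apply: (squeeze_cvgr _ (cvg_cst 0) Hg).
  by apply: nearW => k; rewrite Hnorm sqrtr_ge0 Hgeo.
exists c, 0%N; split; first by apply/andP.
by move=> k _; rewrite !Hnorm; exact: Hrate.
Qed.

End Proof1.

Theorem corollary2 (R : realType) (S : finType) (n N : nat) (Om : eqType)
  (p : S -> R) (sc : S -> 'I_N -> Om) (stage : 'I_n -> 'I_N)
  (C : S -> set 'rV[R]_n) (F : S -> 'rV[R]_n -> 'rV[R]_n) (r : R)
  (sigbar theta : R) (sigma tau : nat -> R)
  (x w xh wh : nat -> @Ln R S n) :
  injective sc ->
  {homo stage : i j / (i <= j)%N} ->
  (forall s, 0 < p s) -> \sum_s p s = 1 ->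
  (forall s, exists c, C s c) -> (forall s, closed (C s)) ->
  (forall s, is_convex (C s)) ->
  (forall s, continuous (F s)) -> (forall s, monotone_map (F s)) ->
  0 < r ->
  lipschitz_at_zero p (ATAinv p sc stage F C r) ->
  IPHA_run p sc stage F C r sigbar theta sigma tau x w xh wh ->
  exists xs ws : @Ln R S n,
    SVI_solution p sc stage F C xs ws /\
    (fun k => normMr p r (x k - xs) (w k - ws)) @ \oo --> 0 /\
    exists (c : R) (k0 : nat), 0 < c < 1 /\
      forall k, (k0 <= k)%N ->
        normMr p r (x k.+1 - xs) (w k.+1 - ws) <= c * normMr p r (x k - xs) (w k - ws).
Proof.
move=> _ _ Hp _ _ _ _ _ Hmono r0 Hlip Hrun.
exact: (@main_conv R S n N Om p sc stage (Wrap _ Hp) F C r (Wrap _ Hmono) (Wrap _ r0)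
  sigbar theta sigma tau x w xh wh Hlip Hrun).
Qed.
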